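(* Let $I=\langle Q,D,\tau_{in},\tau_{out},\tau_{mem}\rangle$ be an instance of Forget where $Q$ is nonrecursive, connected, contains no rigid atoms and no time points in its rules, and let $Q_1,Q_2$ be the queries constructed from $I$ as in the context. Then Forget holds for $I$ if and only if $Q_1\sqsubseteq Q_2$.
   Context: Temporal Datalog. Constants are partitioned into objects and integer time points; variables into object variables and time variables. A time term is a time point, a time variable, or an expression $t+k$ with $t$ a time variable and $k\in\mathbb{Z}$. Each predicate is either extensional (EDB) or intensional (IDB) and has an arity $n\ge0$, each position being of object sort or time sort; a predicate is rigid if all its positions are of object sort, and temporal if its last position is of time sort and all others are of object sort. An atom $P(t_1,\dots,t_n)$ has terms of the required sorts. A rule is $\bigwedge_i\alpha_i\to\alpha$ with $\alpha$ and all $\alpha_i$ rigid or temporal atoms, $\alpha$ IDB whenever the body is nonempty, and every head variable occurring in the body. A program is a finite set of rules. A fact is a ground rigid or temporal atom without $+$ (identified with the rule $\top\to\alpha$); a dataset is a finite set of EDB facts. Rules are read as universally quantified first-order sentences with $+$ interpreted as integer addition; $\Pi\models\alpha$ denotes entailment. A query is $Q=\langle P_Q,\Pi_Q\rangle$ with $\Pi_Q$ a program and $P_Q$ an IDB predicate of $\Pi_Q$; it is temporal if $P_Q$ is temporal. $Q(D)$ is the set of tuples $\vec a$ of constants with $\Pi_Q\cup D\models P_Q(\vec a)$; for a temporal query $Q$ and time point $\tau$, $Q(D,\tau)$ is the set of tuples of objects $\vec o$ with $\Pi_Q\cup D\models P_Q(\vec o,\tau)$. $Q_1\sqsubseteq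 Q_2$ means $Q_1(D)\subseteq Q_2(D)$ for every dataset $D$. For a dataset $D$ and time point $\tau$, $D[\tau]$ is the set of all rigid facts of $D$ together with the temporal facts of $D$ whose time argument is $>\tau$. A $\tau_{in}$-history is a dataset consisting of rigid facts and temporal facts with time argument $\le\tau_{in}$; a $\tau_{in}$-update is a dataset consisting of temporal facts with time argument $>\tau_{in}$. Forget: an instance is $\langle Q,D,\tau_{in},\tau_{out},\tau_{mem}\rangle$ with $Q$ a temporal query, $D$ a $\tau_{in}$-history and $\tau_{mem}\le\tau_{out}\le\tau_{in}$; Forget holds for it iff $Q(D\cup U,\tau)=Q(D[\tau_{mem}]\cup U,\tau)$ for every $\tau_{in}$-update $U$ and every time point $\tau\ge\tau_{out}$. Predicate $P$ depends on $P'$ in $\Pi$ if some rule of $\Pi$ has $P$ in the head and $P'$ in the body; $\Pi$ (or a query with program $\Pi$) is nonrecursive if the graph of this dependency relation is acyclic. A rule is connected if it contains at most one time variable and, if a time variable occurs in the body, it also occurs in the head; a query is connected if all its rules are. For a time term $s$, $\Delta(s)=k$ if $s=t+k$ with $t$ a variable, and $\Delta(s)=0$ otherwise. The radius of a connected rule $r$ mentioning a time variable is the maximum of $|\Delta(s)-\Delta(s')|$ where $s$ is the time argument of the head and $s'$ the time argument of a body atom of $r$. The radius $\mathrm{rad}(\Pi)$ of a connected program is the number of rules of $\Pi$ times the maximum radius of a rule of $\Pi$; $\mathrm{rad}(Q)=\mathrm{rad}(\Pi_Q)$. Construction: a time point $\tau$ is output-relevant if $\tau_{out}\le\tau\le\tau_{mem}+\mathrm{rad}(Q)$,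 and update-relevant if $\tau_{in}<\tau\le\tau_{mem}+2\,\mathrm{rad}(Q)$. Let $\psi$ map each temporal EDB predicate to a fresh temporal IDB predicate of the same arity (applied to programs/datasets by renaming). Let $B$ be a fresh unary temporal IDB predicate and $D_0=\{B(\tau):\tau\text{ update-relevant}\}$. Let $\Pi$ be the smallest program containing: (i) each rule of $\psi(\Pi_Q)$ whose head predicate differs from $P_Q$; (ii) each rule obtained from a rule of $\psi(\Pi_Q)$ with head predicate $P_Q$ by substituting its time variable so that the time argument of the head becomes an output-relevant time point; (iii) the rule $P(\vec x,t)\wedge B(t)\to\psi(P)(\vec x,t)$ for each temporal EDB predicate $P$ of $\Pi_Q$. Then $Q_1=\langle P_Q,\Pi\cup D_0\cup\psi(D)\rangle$ and $Q_2=\langle P_Q,\Pi\cup D_0\cup\psi(D[\tau_{mem}])\rangle$. *)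

(* Defs.v *)
From Stdlib Require Import Bool ZArith List Relations.
Import ListNotations.
Open Scope Z_scope.

(** Object constants (a countably infinite supply). Time points are integers. *)
Definition Obj := nat.

(** A signature: predicates with EDB/IDB status, number of object positions,
    and whether they are temporal (object positions followed by one time
    position) or rigid (object positions only). *)
Record Sig := {
  pred : Type;
  peq_dec : forall p q : pred, {p = q} + {p <> q};
  is_edb : pred -> bool;
  oarity : pred -> nat;
  is_temporal : pred -> bool
}.

Inductive oterm := OVar (x : nat) | OCst (o : Obj).
Inductive tterm := TCst (z : Z) | TVar (t : nat) | TShift (t : nat) (k : Z).

Record atom (S : Sig) := mkAtom { apred : pred S; aobj : list oterm; atime : option tterm }.
Arguments mkAtom {S}. Arguments apred {S}. Arguments aobj {S}. Arguments atime {S}.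

Record rule (S : Sig) := mkRule { body : list (atom S); head : atom S }.
Arguments mkRule {S}. Arguments body {S}. Arguments head {S}.

Definition program (S : Sig) := list (rule S).

Definition wf_atom {S} (a : atom S) : Prop :=
  length (aobj a) = oarity S (apred a) /\
  (is_temporal S (apred a) = true <-> atime a <> None).

Definition ovars_of_atom {S} (a : atom S) : list nat :=
  flat_map (fun o => match o with OVar x => [x] | OCst _ => [] end) (aobj a).
Definition tvar_of_term (s : tterm) : list nat :=
  match s with TCst _ => [] | TVar t => [t] | TShift t _ => [t] end.
Definition tvars_of_atom {S} (a : atom S) : list nat :=
  match atime a with Some s => tvar_of_term s | None => [] end.

Definition wf_rule {S} (r : rule S) : Prop :=
  wf_atom (head r) /\ Forall wf_atom (body r) /\
  (body r <> [] -> is_edb S (apred (head r)) = false) /\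
  (forall x, In x (ovars_of_atom (head r)) -> In x (flat_map ovars_of_atom (body r))) /\
  (forall t, In t (tvars_of_atom (head r)) -> In t (flat_map tvars_of_atom (body r))).

(** A program is a finite set of rules, represented by a duplicate-free list. *)
Definition wf_program {S} (P : program S) : Prop := NoDup P /\ Forall wf_rule P.

Definition is_fact {S} (a : atom S) : Prop :=
  wf_atom a /\ Forall (fun o => exists c, o = OCst c) (aobj a) /\
  (atime a = None \/ exists z, atime a = Some (TCst z)).
Definition fact_rule {S} (a : atom S) : rule S := mkRule [] a.
Definition dataset {S} (D : list (atom S)) : Prop :=
  Forall (fun a => is_fact a /\ is_edb S (apred a) = true) D.

(** First-order semantics: the object sort is interpreted in an arbitrary
    domain, the time sort in Z (time points denote themselves, + is integer
    addition). *)
Record interp (S : Sig) := {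
  dom : Type;
  cst : Obj -> dom;
  rel : pred S -> list dom -> option Z -> Prop
}.
Arguments dom {S}. Arguments cst {S}. Arguments rel {S}.

Definition eval_o {S} (I : interp S) (ov : nat -> dom I) (o : oterm) : dom I :=
  match o with OVar x => ov x | OCst c => cst I c end.
Definition eval_t (tv : nat -> Z) (s : tterm) : Z :=
  match s with TCst z => z | TVar t => tv t | TShift t k => tv t + k end.

Definition holds {S} (I : interp S) (ov : nat -> dom I) (tv : nat -> Z) (a : atom S) : Prop :=
  rel I (apred a) (map (eval_o I ov) (aobj a)) (option_map (eval_t tv) (atime a)).

Definition sat_rule {S} (I : interp S) (r : rule S) : Prop :=
  forall ov tv, (forall b, In b (body r) -> holds I ov tv b) -> holds I ov tv (head r).

Definition is_model {S} (I : interp S) (P : program S) : Prop :=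
  forall r, In r P -> sat_rule I r.

Definition entails {S} (P : program S) (a : atom S) : Prop :=
  forall I : interp S, is_model I P -> forall ov tv, holds I ov tv a.

Record query (S : Sig) := mkQuery { qpred : pred S; qprog : program S }.
Arguments mkQuery {S}. Arguments qpred {S}. Arguments qprog {S}.

Definition preds_of {S} (P : program S) : list (pred S) :=
  flat_map (fun r => map apred (head r :: body r)) P.

Definition wf_query {S} (Q : query S) : Prop :=
  wf_program (qprog Q) /\ is_edb S (qpred Q) = false /\ In (qpred Q) (preds_of (qprog Q)).

Definition temporal_query {S} (Q : query S) : Prop := is_temporal S (qpred Q) = true.

Definition ground_atom {S} (p : pred S) (os : list Obj) (ot : option Z) : atom S :=
  mkAtom p (map OCst os) (option_map TCst ot).

Definition Qans {S} (Q : query S) (D : list (atom S)) (os : list Obj) (ot : option Z) : Prop :=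
  length os = oarity S (qpred Q) /\
  (is_temporal S (qpred Q) = true <-> ot <> None) /\
  entails (qprog Q ++ map fact_rule D) (ground_atom (qpred Q) os ot).

Definition Qans_at {S} (Q : query S) (D : list (atom S)) (tau : Z) (os : list Obj) : Prop :=
  Qans Q D os (Some tau).

Definition contained {S} (Q1 Q2 : query S) : Prop :=
  forall D, dataset D -> forall os ot, Qans Q1 D os ot -> Qans Q2 D os ot.

Definition keep_after {S} (tau : Z) (a : atom S) : bool :=
  match atime a with
  | None => true
  | Some (TCst z) => Z.ltb tau z
  | Some _ => true
  end.
Definition restrict {S} (D : list (atom S)) (tau : Z) : list (atom S) :=
  filter (keep_after tau) D.

Definition history {S} (tin : Z) (D : list (atom S)) : Prop :=
  dataset D /\
  Forall (fun a => is_temporal S (apred a) = false \/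
                   exists z, atime a = Some (TCst z) /\ z <= tin) D.

Definition update {S} (tin : Z) (U : list (atom S)) : Prop :=
  dataset U /\
  Forall (fun a => is_temporal S (apred a) = true /\
                   exists z, atime a = Some (TCst z) /\ tin < z) U.

Definition forget_instance {S} (Q : query S) (D : list (atom S)) (tin tout tmem : Z) : Prop :=
  wf_query Q /\ temporal_query Q /\ history tin D /\ tmem <= tout /\ tout <= tin.

Definition forget {S} (Q : query S) (D : list (atom S)) (tin tout tmem : Z) : Prop :=
  forall U, update tin U -> forall tau, tout <= tau ->
  forall os, Qans_at Q (D ++ U) tau os <-> Qans_at Q (restrict D tmem ++ U) tau os.

Definition depends {S} (P : program S) (p p' : pred S) : Prop :=
  exists r, In r P /\ apred (head r) = p /\ exists b, In b (body r) /\ apred b = p'.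
Definition nonrecursive {S} (P : program S) : Prop :=
  forall p, ~ clos_trans _ (depends P) p p.

Definition tvars_of_rule {S} (r : rule S) : list nat :=
  tvars_of_atom (head r) ++ flat_map tvars_of_atom (body r).
Definition connected_rule {S} (r : rule S) : Prop :=
  (forall t1 t2, In t1 (tvars_of_rule r) -> In t2 (tvars_of_rule r) -> t1 = t2) /\
  (forall t, In t (flat_map tvars_of_atom (body r)) -> In t (tvars_of_atom (head r))).
Definition connected {S} (P : program S) : Prop := forall r, In r P -> connected_rule r.

Definition atoms_of_rule {S} (r : rule S) : list (atom S) := head r :: body r.
Definition no_rigid_atoms {S} (P : program S) : Prop :=
  forall r a, In r P -> In a (atoms_of_rule r) -> is_temporal S (apred a) = true.
Definition no_time_points {S} (P : program S) : Prop :=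
  forall r a z, In r P -> In a (atoms_of_rule r) -> atime a <> Some (TCst z).

Definition delta (s : tterm) : Z := match s with TShift _ k => k | _ => 0 end.
Definition rule_rad {S} (r : rule S) : Z :=
  match atime (head r) with
  | None => 0
  | Some sh =>
      fold_right Z.max 0
        (map (fun b => match atime b with
                       | Some sb => Z.abs (delta sh - delta sb)
                       | None => 0 end) (body r))
  end.
Definition rad {S} (P : program S) : Z :=
  Z.of_nat (length P) * fold_right Z.max 0 (map rule_rad P).

Definition zrange (lo hi : Z) : list Z :=
  map (fun i => lo + Z.of_nat i) (seq 0 (Z.to_nat (hi - lo + 1))).

Inductive epred (P : Type) := EOrig (p : P) | EPsi (p : P) | EB.
Arguments EOrig {P}. Arguments EPsi {P}. Arguments EB {P}.

Definition epred_eq_dec (S : Sig) : forall p q : epred (pred S), {p = q} + {p <> q}.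
Proof. decide equality; apply peq_dec. Defined.

Definition ext (S : Sig) : Sig := {|
  pred := epred (pred S);
  peq_dec := epred_eq_dec S;
  is_edb := fun p => match p with EOrig p => is_edb S p | _ => false end;
  oarity := fun p => match p with EOrig p | EPsi p => oarity S p | EB => O end;
  is_temporal := fun p => match p with EOrig p => is_temporal S p | _ => true end
|}.

Definition psi_pred {S} (p : pred S) : pred (ext S) :=
  if is_edb S p && is_temporal S p then EPsi p else EOrig p.
Definition psi_atom {S} (a : atom S) : atom (ext S) :=
  mkAtom (psi_pred (apred a)) (aobj a) (atime a).
Definition psi_rule {S} (r : rule S) : rule (ext S) :=
  mkRule (map psi_atom (body r)) (psi_atom (head r)).

Definition subst_tterm (t : nat) (c : Z) (s : tterm) : tterm :=
  match s with
  | TCst z => TCst z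
  | TVar t' => if Nat.eqb t' t then TCst c else TVar t'
  | TShift t' k => if Nat.eqb t' t then TCst (c + k) else TShift t' k
  end.
Definition subst_atom {S} (t : nat) (c : Z) (a : atom S) : atom S :=
  mkAtom (apred a) (aobj a) (option_map (subst_tterm t c) (atime a)).
Definition subst_rule {S} (t : nat) (c : Z) (r : rule S) : rule S :=
  mkRule (map (subst_atom t c) (body r)) (subst_atom t c (head r)).

Definition inst_head {S} (tau : Z) (r : rule S) : list (rule S) :=
  match atime (head r) with
  | Some (TVar t) => [subst_rule t tau r]
  | Some (TShift t k) => [subst_rule t (tau - k) r]
  | Some (TCst z) => if Z.eqb z tau then [r] else []
  | None => []
  end.

Section Construction.
Context {S : Sig} (Q : query S) (tin tout tmem : Z).

Definition out_range : list Z := zrange tout (tmem + rad (qprog Q)).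
Definition upd_range : list Z := zrange (tin + 1) (tmem + 2 * rad (qprog Q)).

Definition is_PQ_head (r : rule (ext S)) : bool :=
  if peq_dec (ext S) (apred (head r)) (EOrig (qpred Q)) then true else false.

Definition part_i : program (ext S) :=
  filter (fun r => negb (is_PQ_head r)) (map psi_rule (qprog Q)).
Definition part_ii : program (ext S) :=
  flat_map (fun r => flat_map (fun tau => inst_head tau r) out_range)
           (filter is_PQ_head (map psi_rule (qprog Q))).
Definition copy_rule (p : pred S) : rule (ext S) :=
  let xs := map OVar (seq 0 (oarity S p)) in
  mkRule (S := ext S) [mkAtom (S := ext S) (EOrig p) xs (Some (TVar 0)); mkAtom (S := ext S) EB [] (Some (TVar 0))]
         (mkAtom (S := ext S) (EPsi p) xs (Some (TVar 0))).
Definition part_iii : program (ext S) :=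
  map copy_rule (filter (fun p => is_edb S p && is_temporal S p) (preds_of (qprog Q))).

Definition Pi_constr : program (ext S) := part_i ++ part_ii ++ part_iii.

Definition D0 : list (atom (ext S)) :=
  map (fun tau => mkAtom (S := ext S) EB [] (Some (TCst tau))) upd_range.

Definition Q1 (D : list (atom S)) : query (ext S) :=
  mkQuery (S := ext S) (EOrig (qpred Q)) (Pi_constr ++ map fact_rule (D0 ++ map psi_atom D)).
Definition Q2 (D : list (atom S)) : query (ext S) :=
  mkQuery (S := ext S) (EOrig (qpred Q)) (Pi_constr ++ map fact_rule (D0 ++ map psi_atom (restrict D tmem))).
End Construction.

(* Main.v *)
From Stdlib Require Import Bool ZArith List Lia Classical Relations.
Require Import Defs.
Import ListNotations.
Open Scope Z_scope.

Lemma fact_entailed {S} (P : program S) a : In (fact_rule a) P -> entails P a.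
Proof. intros H I HI ov tv. apply (HI _ H ov tv). simpl. tauto. Qed.

Lemma entails_mono {S} (P P' : program S) a : incl P P' -> entails P a -> entails P' a.
Proof. intros Hi H I HI. apply H. intros r Hr. apply HI, Hi, Hr. Qed.

Lemma holds_ground {S} (I : interp S) ov tv p os ot :
  holds I ov tv (ground_atom p os ot) <-> rel I p (map (cst I) os) ot.
Proof.
  unfold holds, ground_atom; simpl. rewrite map_map.
  replace (option_map (eval_t tv) (option_map TCst ot)) with ot by (destruct ot; reflexivity).
  reflexivity.
Qed.

Definition canon {S} (P : program S) : interp S :=
  {| dom := Obj; cst := fun c => c; rel := fun p os ot => entails P (ground_atom p os ot) |}.

Lemma canon_model {S} (P : program S) : is_model (canon P) P.
Proof.
  intros r Hr ov tv Hb I HI ov' tv'.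
  apply holds_ground.
  assert (E : forall a : atom S, map (cst I) (map (eval_o (canon P) ov) (aobj a)) =
            map (eval_o I (fun x => cst I (ov x))) (aobj a)).
  { intro a. rewrite map_map. apply map_ext. intros [x|c]; reflexivity. }
  unfold holds in *. rewrite E.
  apply (HI r Hr (fun x => cst I (ov x)) tv).
  intros b Hb'. specialize (Hb b Hb'). simpl in Hb.
  specialize (Hb I HI ov' tv'). apply holds_ground in Hb. rewrite E in Hb.
  replace (option_map (eval_t tv) (atime b)) with (option_map (eval_t tv) (atime b)) in Hb by reflexivity.
  exact Hb.
Qed.

Lemma fact_ground {S} (a : atom S) : is_fact a ->
  exists os ot, a = ground_atom (apred a) os ot.
Proof.
  destruct a as [p ob tm]; intros [_ [Ho Ht]]; simpl in *.
  assert (exists os, ob = map OCst os) as [os ->].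
  { induction Ho as [|o l [c ->] _ [os IH]]. exists []; reflexivity. exists (c :: os); simpl; congruence. }
  destruct Ht as [-> | [z ->]].
  - exists os, None; reflexivity.
  - exists os, (Some z); reflexivity.
Qed.

Definition upd (tv : nat -> Z) t c := fun t' => if Nat.eqb t' t then c else tv t'.

Lemma subst_holds {S} (I : interp S) ov tv t c a :
  holds I ov tv (subst_atom t c a) <-> holds I ov (upd tv t c) a.
Proof.
  unfold holds, subst_atom; simpl.
  replace (option_map (eval_t tv) (option_map (subst_tterm t c) (atime a)))
    with (option_map (eval_t (upd tv t c)) (atime a)). reflexivity.
  destruct (atime a) as [[z|t'|t' k]|]; simpl; unfold upd; try reflexivity;
  destruct (Nat.eqb t' t); reflexivity.
Qed.

Lemma subst_same {S} (I : interp S) ov tv t a :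
  holds I ov tv (subst_atom t (tv t) a) <-> holds I ov tv a.
Proof.
  unfold holds, subst_atom; simpl.
  replace (option_map (eval_t tv) (option_map (subst_tterm t (tv t)) (atime a)))
    with (option_map (eval_t tv) (atime a)). reflexivity.
  destruct (atime a) as [[z|t'|t' k]|]; simpl; try reflexivity;
  destruct (Nat.eqb_spec t' t); subst; reflexivity.
Qed.

Lemma in_zrange lo hi z : In z (zrange lo hi) <-> lo <= z <= hi.
Proof.
  unfold zrange. rewrite in_map_iff. split.
  - intros [i [<- Hi]]. apply in_seq in Hi. lia.
  - intros H. exists (Z.to_nat (z - lo)). split. lia. apply in_seq. lia.
Qed.

Lemma fold_max_ge l x : In x l -> x <= fold_right Z.max 0 l.
Proof. induction l; simpl; [tauto|]. intros [H|H]; subst; try lia. specialize (IHl H). lia. Qed.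
Lemma fold_max_nonneg l : 0 <= fold_right Z.max 0 l.
Proof. induction l; simpl; lia. Qed.

Lemma map_nth_seq {A} (l : list A) d : map (fun i => nth i l d) (seq 0 (length l)) = l.
Proof.
  induction l; simpl; auto. f_equal. rewrite <- seq_shift, map_map. simpl. exact IHl.
Qed.

Inductive path {Sg} (P : program Sg) (r0 : pred Sg) : nat -> pred Sg -> Prop :=
| path0 : path P r0 0 r0
| pathS n q q' : path P r0 n q -> depends P q q' -> path P r0 (Datatypes.S n) q'.

Lemma path_ct {Sg} (P : program Sg) r0 n q : path P r0 n q -> (n > 0)%nat -> clos_trans _ (depends P) r0 q.
Proof.
  induction 1; intros Hn. lia.
  destruct n. inversion H; subst. now apply t_step.
  eapply t_trans. apply IHpath; lia. now apply t_step.
Qed.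

Lemma path_list {Sg} (P : program Sg) r0 n q : nonrecursive P -> path P r0 n q ->
  exists l, length l = n /\ NoDup l /\ (forall x, In x l -> clos_trans _ (depends P) x q) /\
    incl l (map (fun r => apred (head r)) P).
Proof.
  intros Hnr. induction 1 as [|n q q' Hp IH Hd].
  - exists []. repeat split; simpl; auto. constructor. intros x []. intros x [].
  - destruct IH as [l [Hl [Hnd [Hct Hinc]]]].
    exists (l ++ [q]). rewrite length_app; simpl. split. lia. split.
    + apply NoDup_app; auto. constructor. intros []. constructor. intros x Hx [<-|[]].
      apply (Hnr q). apply Hct, Hx.
    + split.
      * intros x Hx. apply in_app_or in Hx as [Hx|[<-|[]]].
        eapply t_trans. apply Hct, Hx. now apply t_step. now apply t_step.
      * intros x Hx. apply in_app_or in Hx as [Hx|[<-|[]]]. auto.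
        destruct Hd as [r [Hr [Hh _]]]. apply in_map_iff. exists r; auto.
Qed.

Lemma path_bound {Sg} (P : program Sg) r0 n q : nonrecursive P -> path P r0 n q -> (n <= length P)%nat.
Proof.
  intros Hnr Hp. destruct (path_list P r0 n q Hnr Hp) as [l [<- [Hnd [_ Hinc]]]].
  rewrite <- (length_map (fun r => apred (head r)) P). now apply NoDup_incl_length.
Qed.

Lemma path_root {Sg} (P : program Sg) r0 n : nonrecursive P -> path P r0 n r0 -> n = 0%nat.
Proof.
  intros Hnr Hp. destruct n; auto. exfalso. apply (Hnr r0). apply (path_ct P r0 (Datatypes.S n)); auto; lia.
Qed.

Lemma path_pred {Sg} (P : program Sg) r0 n q : path P r0 n q -> q <> r0 -> In q (preds_of P).
Proof.
  destruct 1 as [|n q q' _ Hd]. tauto. intros _.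
  destruct Hd as [r [Hr [_ [b [Hb <-]]]]]. unfold preds_of. apply in_flat_map.
  exists r. split; auto. simpl. right. apply in_map, Hb.
Qed.

Definition junk {Sg} (P : program Sg) r0 (R tau : Z) (p : pred Sg) (z : Z) : Prop :=
  ~ (exists n, path P r0 n p /\ Z.abs (z - tau) <= Z.of_nat n * R).

Lemma junk_step {Sg} (P : program Sg) r0 R tau p q zh zb :
  ~ junk P r0 R tau p zh -> depends P p q -> Z.abs (zh - zb) <= R -> ~ junk P r0 R tau q zb.
Proof.
  unfold junk. intros H Hd Hz Hj. apply NNPP in H. destruct H as [n [Hp Hn]].
  apply Hj. exists (Datatypes.S n). split. econstructor; eauto.
  rewrite Nat2Z.inj_succ. rewrite Z.mul_succ_l. lia.
Qed.

Lemma nonjunk_root {Sg} (P : program Sg) r0 R tau z : nonrecursive P ->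
  ~ junk P r0 R tau r0 z -> z = tau.
Proof.
  unfold junk. intros Hnr H. apply NNPP in H. destruct H as [n [Hp Hn]].
  apply path_root in Hp; auto. subst. simpl in Hn. lia.
Qed.

Lemma nonjunk_bound {Sg} (P : program Sg) r0 R tau p z : nonrecursive P -> 0 <= R ->
  ~ junk P r0 R tau p z -> Z.abs (z - tau) <= Z.of_nat (length P) * R.
Proof.
  unfold junk. intros Hnr HR H. apply NNPP in H. destruct H as [n [Hp Hn]].
  apply path_bound in Hp; auto. apply Nat2Z.inj_le in Hp.
  assert (Z.of_nat n * R <= Z.of_nat (length P) * R) by (apply Z.mul_le_mono_nonneg_r; lia). lia.
Qed.

Lemma nonjunk_pred {Sg} (P : program Sg) r0 R tau p z :
  ~ junk P r0 R tau p z -> p <> r0 -> In p (preds_of P).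
Proof.
  unfold junk. intros H Hne. apply NNPP in H. destruct H as [n [Hp Hn]]. eapply path_pred; eauto.
Qed.

Lemma not_junk_root {Sg} (P : program Sg) r0 R tau : ~ junk P r0 R tau r0 tau.
Proof. unfold junk. intros H. apply H. exists 0%nat. split. constructor. simpl. lia. Qed.

Definition Rmax {Sg} (P : program Sg) := fold_right Z.max 0 (map rule_rad P).


Lemma atom_time {Sg} (a : atom Sg) : wf_atom a -> is_temporal Sg (apred a) = true ->
  (forall z, atime a <> Some (TCst z)) ->
  exists s t, atime a = Some s /\ tvars_of_atom a = [t] /\ forall tv, eval_t tv s = tv t + delta s.
Proof.
  intros [_ Ht] Htemp Hnz. apply Ht in Htemp. unfold tvars_of_atom.
  destruct (atime a) as [[z|t|t k]|]; [exfalso; eapply Hnz; eauto | | | tauto].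
  - exists (TVar t), t. simpl. repeat split. intros; lia.
  - exists (TShift t k), t. simpl. repeat split.
Qed.

Lemma rule_atoms_time {Sg} (P : program Sg) r a :
  Forall wf_rule P -> no_rigid_atoms P -> no_time_points P -> In r P -> In a (atoms_of_rule r) ->
  exists s t, atime a = Some s /\ tvars_of_atom a = [t] /\ forall tv, eval_t tv s = tv t + delta s.
Proof.
  intros Hwf Hnr Hnt Hr Ha. apply atom_time.
  - rewrite Forall_forall in Hwf. destruct (Hwf r Hr) as [Hh [Hb _]].
    destruct Ha as [<-|Ha]; auto. rewrite Forall_forall in Hb; auto.
  - eapply Hnr; eauto.
  - intros z. eapply Hnt; eauto.
Qed.

Lemma time_step {Sg} (P : program Sg) r b tv :
  Forall wf_rule P -> connected P -> no_rigid_atoms P -> no_time_points P -> In r P -> In b (body r) ->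
  exists zh zb, option_map (eval_t tv) (atime (head r)) = Some zh /\
    option_map (eval_t tv) (atime b) = Some zb /\ Z.abs (zh - zb) <= Rmax P.
Proof.
  intros Hwf Hc Hnr Hnt Hr Hb.
  destruct (rule_atoms_time P r (head r) Hwf Hnr Hnt Hr (or_introl eq_refl)) as [sh [th [Eh [Th Vh]]]].
  destruct (rule_atoms_time P r b Hwf Hnr Hnt Hr (or_intror Hb)) as [sb [tb [Eb [Tb Vb]]]].
  assert (th = tb).
  { apply (proj1 (Hc r Hr)); unfold tvars_of_rule; apply in_or_app.
    left. rewrite Th; now left. right. apply in_flat_map. exists b. split; auto. rewrite Tb; now left. }
  subst tb. rewrite Eh, Eb. simpl. exists (eval_t tv sh), (eval_t tv sb). repeat split.
  rewrite Vh, Vb.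
  assert (Z.abs (delta sh - delta sb) <= rule_rad r).
  { unfold rule_rad. rewrite Eh. apply fold_max_ge. apply in_map_iff. exists b. rewrite Eb. auto. }
  assert (rule_rad r <= Rmax P).
  { unfold Rmax. apply fold_max_ge. apply in_map, Hr. }
  replace (tv th + delta sh - (tv th + delta sb)) with (delta sh - delta sb) by ring. lia.
Qed.

Lemma body_nonempty {Sg} (P : program Sg) r :
  Forall wf_rule P -> no_rigid_atoms P -> no_time_points P -> In r P ->
  body r <> [] /\ is_edb Sg (apred (head r)) = false.
Proof.
  intros Hwf Hnr Hnt Hr.
  destruct (rule_atoms_time P r (head r) Hwf Hnr Hnt Hr (or_introl eq_refl)) as [sh [th [Eh [Th Vh]]]].
  rewrite Forall_forall in Hwf. destruct (Hwf r Hr) as [_ [_ [He [_ Ht]]]].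
  assert (body r <> []).
  { intro E. specialize (Ht th). rewrite Th, E in Ht. simpl in Ht. apply Ht; auto. }
  auto.
Qed.

Definition mkK {Sg} (I : interp Sg) (A : pred Sg -> list (dom I) -> Z -> Prop)
  (Bn : pred Sg -> list (dom I) -> Prop) (J : pred Sg -> Z -> Prop) : interp Sg :=
  {| dom := dom I; cst := cst I;
     rel := fun p ds ot => match ot with Some z => A p ds z \/ J p z | None => Bn p ds end |}.

Lemma junk_rule {Sg} (P : program Sg) r0 tau (I : interp Sg) A Bn r ov tv :
  Forall wf_rule P -> connected P -> no_rigid_atoms P -> no_time_points P -> nonrecursive P ->
  In r P ->
  (forall b, In b (body r) -> holds (mkK I A Bn (junk P r0 (Rmax P) tau)) ov tv b) ->
  exists zh, option_map (eval_t tv) (atime (head r)) = Some zh /\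
   (junk P r0 (Rmax P) tau (apred (head r)) zh \/
    (~ junk P r0 (Rmax P) tau (apred (head r)) zh /\
     forall b, In b (body r) -> exists zb, option_map (eval_t tv) (atime b) = Some zb /\
        A (apred b) (map (eval_o I ov) (aobj b)) zb)).
Proof.
  intros Hwf Hc Hnr Hnt Hacyc Hr Hb.
  destruct (rule_atoms_time P r (head r) Hwf Hnr Hnt Hr (or_introl eq_refl)) as [sh [th [Eh _]]].
  exists (eval_t tv sh). rewrite Eh. split; auto.
  destruct (classic (junk P r0 (Rmax P) tau (apred (head r)) (eval_t tv sh))) as [Hj|Hj]; [left; auto|right].
  split; auto. intros b Hbb.
  destruct (time_step P r b tv Hwf Hc Hnr Hnt Hr Hbb) as [zh [zb [E1 [E2 Hd]]]].
  rewrite Eh in E1. simpl in E1. injection E1 as E1. subst zh.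
  exists zb. split; auto. specialize (Hb b Hbb). unfold holds in Hb. rewrite E2 in Hb. simpl in Hb.
  destruct Hb as [Hb|Hb]; auto. exfalso. revert Hb. eapply junk_step; eauto.
  exists r. split; auto. split; auto. exists b; auto.
Qed.

Lemma loc {Sg} (P : program Sg) r0 (X U : list (atom Sg)) tmem tau os :
  Forall wf_rule P -> connected P -> no_rigid_atoms P -> no_time_points P -> nonrecursive P ->
  tmem + rad P < tau ->
  entails (P ++ map fact_rule (X ++ U)) (ground_atom r0 os (Some tau)) ->
  entails (P ++ map fact_rule (restrict X tmem ++ U)) (ground_atom r0 os (Some tau)).
Proof.
  intros Hwf Hc Hnr Hnt Hacyc Htau H I HI ov tv.
  set (K := mkK I (fun p ds z => rel I p ds (Some z)) (fun p ds => rel I p ds None) (junk P r0 (Rmax P) tau)).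
  assert (HK : is_model K (P ++ map fact_rule (X ++ U))).
  { intros r Hr. apply in_app_or in Hr as [Hr|Hr].
    - intros ov' tv' Hb. destruct (junk_rule P r0 tau I _ _ r ov' tv' Hwf Hc Hnr Hnt Hacyc Hr Hb)
        as [zh [Ezh [Hj|[_ Hb']]]].
      + unfold holds. rewrite Ezh. simpl. now right.
      + unfold holds. rewrite Ezh. simpl. left.
        assert (HI' := HI r (in_or_app _ _ _ (or_introl Hr)) ov' tv').
        unfold holds in HI'. rewrite Ezh in HI'. apply HI'.
        intros b Hbb. destruct (Hb' b Hbb) as [zb [Ezb Hab]]. unfold holds. rewrite Ezb. exact Hab.
    - apply in_map_iff in Hr as [a [<- Ha]]. intros ov' tv' _. simpl.
      assert (Hgen : In a (restrict X tmem ++ U) -> holds K ov' tv' a).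
      { intro Hin. assert (HI' := HI (fact_rule a) (in_or_app _ _ _ (or_intror (in_map _ _ _ Hin))) ov' tv').
        simpl in HI'. specialize (HI' (fun b F => match F with end)).
        unfold holds in *. destruct (atime a); simpl in *; auto. }
      apply in_app_or in Ha as [Ha|Ha]; [|apply Hgen, in_or_app; auto].
      destruct (keep_after tmem a) eqn:Ek.
      + apply Hgen, in_or_app. left. apply filter_In. auto.
      + unfold keep_after in Ek. unfold holds. destruct (atime a) as [[z| |]|]; try discriminate.
        simpl. right. apply Z.ltb_ge in Ek. intros Hn.
        assert (Hnn : ~ ~ (exists n, path P r0 n (apred a) /\ Z.abs (z - tau) <= Z.of_nat n * Rmax P)) by tauto.
        apply (nonjunk_bound P r0 (Rmax P) tau) in Hnn; auto.
        unfold rad, Rmax in *. lia. unfold Rmax. apply fold_max_nonneg. }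
  specialize (H K HK ov tv). apply holds_ground in H. simpl in H. destruct H as [H|H].
  - apply holds_ground. exact H.
  - exfalso. revert H. apply not_junk_root.
Qed.

Definition progX {Sg} (Q : query Sg) tin tout tmem (X : list (atom Sg)) (D' : list (atom (ext Sg))) :=
  (Pi_constr Q tout tmem ++ map fact_rule (D0 Q tin tmem ++ map psi_atom X)) ++ map fact_rule D'.

Lemma psi_pred_idb {Sg} (p : pred Sg) : is_edb Sg p = false -> psi_pred p = EOrig p.
Proof. intros H. unfold psi_pred. now rewrite H. Qed.
Lemma psi_pred_edb {Sg} (p : pred Sg) : is_edb Sg p = true -> is_temporal Sg p = true -> psi_pred p = EPsi p.
Proof. intros H H'. unfold psi_pred. now rewrite H, H'. Qed.
Lemma psi_pred_EOrig {Sg} (p q : pred Sg) : psi_pred p = EOrig q -> p = q.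
Proof. unfold psi_pred. destruct (is_edb Sg p && is_temporal Sg p); congruence. Qed.

Lemma in_part_ii {Sg} (Q : query Sg) tout tmem r tau rr :
  In r (qprog Q) -> apred (head r) = qpred Q -> is_edb Sg (qpred Q) = false ->
  In tau (out_range Q tout tmem) -> In rr (inst_head tau (psi_rule r)) -> In rr (Pi_constr Q tout tmem).
Proof.
  intros Hr Hh He Ht Hrr. unfold Pi_constr. apply in_or_app; right; apply in_or_app; left.
  unfold part_ii. apply in_flat_map. exists (psi_rule r). split.
  - apply filter_In. split. apply in_map, Hr. unfold is_PQ_head.
    destruct (peq_dec (ext Sg) _ _) as [|n]; auto. exfalso; apply n. simpl. rewrite Hh. now apply psi_pred_idb.
  - apply in_flat_map. exists tau. auto.
Qed.

Lemma lemmaC {Sg} (Q : query Sg) tin tout tmem (X U : list (atom Sg)) D' tau os :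
  Forall wf_rule (qprog Q) -> connected (qprog Q) -> no_rigid_atoms (qprog Q) -> no_time_points (qprog Q) ->
  nonrecursive (qprog Q) -> is_edb Sg (qpred Q) = false ->
  (forall u, In u U -> is_edb Sg (apred u) = true /\ is_temporal Sg (apred u) = true /\
      length (aobj u) = oarity Sg (apred u) /\ (exists z, atime u = Some (TCst z) /\ tin < z) /\
      In (mkAtom (S := ext Sg) (EOrig (apred u)) (aobj u) (atime u)) D') ->
  In tau (out_range Q tout tmem) ->
  entails (qprog Q ++ map fact_rule (X ++ U)) (ground_atom (qpred Q) os (Some tau)) ->
  entails (progX Q tin tout tmem X D') (ground_atom (S := ext Sg) (EOrig (qpred Q)) os (Some tau)).
Proof.
  intros Hwf Hc Hnr Hnt Hacyc Hr0 HU Htau HE I HI ov tv.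
  set (P := qprog Q). fold P in Hwf, Hc, Hnr, Hnt, Hacyc, HE.
  set (I0 := {| dom := dom I; cst := cst I; rel := fun (_ : pred Sg) (_ : list (dom I)) (_ : option Z) => False |}).
  set (K := mkK I0 (fun p ds z => rel I (psi_pred p) ds (Some z)) (fun _ _ => True) (junk P (qpred Q) (Rmax P) tau)).
  assert (HIP : forall r, In r (Pi_constr Q tout tmem) -> sat_rule I r).
  { intros r Hr. apply HI. unfold progX. apply in_or_app; left; apply in_or_app; now left. }
  assert (HIF : forall a, In a (D0 Q tin tmem ++ map psi_atom X) -> forall ov tv, holds I ov tv a).
  { intros a Ha ov' tv'. apply (HI (fact_rule a)). unfold progX. apply in_or_app; left; apply in_or_app; right.
    now apply in_map. simpl; tauto. }
  assert (HID : forall a, In a D' -> forall ov tv, holds I ov tv a).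
  { intros a Ha ov' tv'. apply (HI (fact_rule a)). unfold progX. apply in_or_app; right. now apply in_map. simpl; tauto. }
  assert (HK : is_model K (P ++ map fact_rule (X ++ U))).
  { intros r Hr. apply in_app_or in Hr as [Hr|Hr].
    - intros ov' tv' Hb. destruct (junk_rule P (qpred Q) tau I0 _ _ r ov' tv' Hwf Hc Hnr Hnt Hacyc Hr Hb)
        as [zh [Ezh [Hj|[Hnj Hb']]]].
      + unfold holds. rewrite Ezh. simpl. now right.
      + unfold holds. rewrite Ezh. simpl. left.
        destruct (body_nonempty P r Hwf Hnr Hnt Hr) as [_ Hidb].
        assert (Hbody : forall b, In b (body r) -> holds I ov' tv' (psi_atom b)).
        { intros b Hbb. destruct (Hb' b Hbb) as [zb [Ezb Hab]]. unfold holds. simpl. rewrite Ezb. exact Hab. }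
        destruct (peq_dec Sg (apred (head r)) (qpred Q)) as [Heq|Hne].
        *
          rewrite Heq in Hnj. apply nonjunk_root in Hnj; auto. subst zh.
          destruct (atime (head r)) as [sh|] eqn:Eh; [|discriminate].
          simpl in Ezh. injection Ezh as Ezh.
          assert (Hex : exists t, In (subst_rule t (tv' t) (psi_rule r)) (inst_head tau (psi_rule r))).
          { unfold inst_head. simpl. rewrite Eh. destruct sh as [z|t|t k].
            - exfalso. eapply Hnt; eauto. now left.
            - exists t. simpl in Ezh. subst. now left.
            - exists t. simpl in Ezh. replace (tau - k) with (tv' t) by lia. now left. }
          destruct Hex as [t Ht].
          assert (Hs := HIP _ (in_part_ii Q tout tmem r tau _ Hr Heq Hr0 Htau Ht) ov' tv').
          simpl in Hs.
          assert (Hh : holds I ov' tv' (subst_atom t (tv' t) (psi_atom (head r)))).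
          { apply Hs. intros b Hbb. apply in_map_iff in Hbb as [b0 [<- Hb0]].
            apply in_map_iff in Hb0 as [b1 [<- Hb1]]. apply subst_same. now apply Hbody. }
          apply subst_same in Hh. unfold holds in Hh. simpl in Hh. rewrite Eh in Hh. simpl in Hh.
          rewrite Ezh in Hh. exact Hh.
        * assert (Hin : In (psi_rule r) (Pi_constr Q tout tmem)).
          { unfold Pi_constr. apply in_or_app; left. unfold part_i. apply filter_In. split.
            apply in_map, Hr. unfold is_PQ_head. destruct (peq_dec (ext Sg) _ _) as [E|]; auto.
            exfalso. apply Hne. apply psi_pred_EOrig. exact E. }
          assert (Hs := HIP _ Hin ov' tv'). simpl in Hs.
          assert (Hh : holds I ov' tv' (psi_atom (head r))).
          { apply Hs. intros b Hbb. apply in_map_iff in Hbb as [b0 [<- Hb0]]. now apply Hbody. }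
          unfold holds in Hh. simpl in Hh. rewrite Ezh in Hh. exact Hh.
    - apply in_map_iff in Hr as [a [<- Ha]]. intros ov' tv' _. simpl.
      apply in_app_or in Ha as [Ha|Ha].
      + assert (H1 := HIF (psi_atom a) (in_or_app _ _ _ (or_intror (in_map _ _ _ Ha))) ov' tv').
        unfold holds in *. simpl in *. destruct (atime a); simpl in *; auto.
      + destruct (HU a Ha) as [He [Ht [Hl [[z [Ez Hz]] Hd]]]].
        unfold holds. rewrite Ez. simpl.
        destruct (classic (junk P (qpred Q) (Rmax P) tau (apred a) z)) as [Hj|Hj]; [now right|left].
        rewrite (psi_pred_edb _ He Ht).
        assert (Hb := nonjunk_bound P (qpred Q) (Rmax P) tau _ _ Hacyc (fold_max_nonneg _) Hj).
        assert (Hpred : In (apred a) (preds_of P)).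
        { apply (nonjunk_pred P (qpred Q) (Rmax P) tau _ z Hj). congruence. }
        unfold out_range in Htau. rewrite in_zrange in Htau.
        assert (HB : holds I ov' tv' (mkAtom (S := ext Sg) EB [] (Some (TCst z)))).
        { apply HIF. apply in_or_app; left. unfold D0. apply (in_map (fun t => mkAtom (S:=ext Sg) EB [] (Some (TCst t)))). unfold upd_range. apply in_zrange.
          unfold rad, Rmax, P in *. lia. }
        assert (Hcopy : In (copy_rule (apred a)) (Pi_constr Q tout tmem)).
        { unfold Pi_constr. apply in_or_app; right; apply in_or_app; right. unfold part_iii.
          apply in_map, filter_In. split; auto. now rewrite He, Ht. }
        set (l := map (eval_o I ov') (aobj a)).
        assert (Hd' := HID _ Hd ov' tv'). unfold holds in Hd'. simpl in Hd'. rewrite Ez in Hd'. simpl in Hd'.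
        assert (Hs := HIP _ Hcopy (fun i => nth i l (cst I 0%nat)) (fun _ => z)).
        unfold copy_rule, holds in Hs. simpl in Hs.
        rewrite map_map in Hs. simpl in Hs.
        assert (El : map (fun i => nth i l (cst I 0%nat)) (seq 0 (oarity Sg (apred a))) = l).
        { rewrite <- Hl. replace (length (aobj a)) with (length l) by (unfold l; apply length_map).
          apply map_nth_seq. }
        rewrite El in Hs. apply Hs. intros b [<-|[<-|[]]]; simpl.
        * rewrite map_map. simpl. rewrite El. exact Hd'.
        * unfold holds in HB. exact HB. }
  specialize (HE K HK ov tv). apply holds_ground in HE. simpl in HE. destruct HE as [H|H].
  - apply holds_ground. rewrite psi_pred_idb in H; auto.
  - exfalso. revert H. apply not_junk_root.
Qed.

Definition Jint {Sg} (Q : query Sg) (tin tout tmem : Z) (X U : list (atom Sg)) (D' : list (atom (ext Sg))) : interp (ext Sg) :=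
  Build_interp (ext Sg) Obj (fun c => c)
     (fun (p : pred (ext Sg)) (ds : list Obj) (ot : option Z) =>
       let M q := entails (qprog Q ++ map fact_rule (X ++ U)) (ground_atom q ds ot) in
       match p with
       | EOrig q => if is_edb Sg q then In (ground_atom (S := ext Sg) (EOrig q) ds ot) D' \/ is_temporal Sg q = false
                    else if peq_dec Sg q (qpred Q) then M q /\ exists t', ot = Some t' /\ In t' (out_range Q tout tmem)
                    else M q
       | EPsi q => M q
       | EB => exists z, ot = Some z /\ In z (upd_range Q tin tmem)
       end).

Lemma lemmaA {Sg} (Q : query Sg) tin tout tmem (X U : list (atom Sg)) D' tau os :
  Forall wf_rule (qprog Q) -> no_rigid_atoms (qprog Q) -> no_time_points (qprog Q) ->
  is_edb Sg (qpred Q) = false -> dataset X -> dataset D' ->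
  (forall p ds z, In (ground_atom (S := ext Sg) (EOrig p) ds (Some z)) D' -> is_edb Sg p = true ->
     is_temporal Sg p = true -> In z (upd_range Q tin tmem) -> In (ground_atom p ds (Some z)) U) ->
  entails (progX Q tin tout tmem X D') (ground_atom (S := ext Sg) (EOrig (qpred Q)) os (Some tau)) ->
  In tau (out_range Q tout tmem) /\
  entails (qprog Q ++ map fact_rule (X ++ U)) (ground_atom (qpred Q) os (Some tau)).
Proof.
  intros Hwf Hnr Hnt Hr0 HX HD' HU HE.
  set (P := qprog Q ++ map fact_rule (X ++ U)).
  set (J := Jint Q tin tout tmem X U D').
  set (M := canon P).
  assert (HM : is_model M P) by apply canon_model.
  assert (HMr : forall r, In r (qprog Q) -> sat_rule M r).
  { intros r Hr. apply HM. unfold P. apply in_or_app; now left. }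
  assert (JM : forall q ds ot, is_temporal Sg q = true -> rel J (psi_pred q) ds ot -> rel M q ds ot).
  { intros q ds ot Ht H. unfold psi_pred in H. rewrite Ht in H. destruct (is_edb Sg q) eqn:Eq; simpl in H.
    - exact H.
    - rewrite Eq in H. destruct (peq_dec Sg q (qpred Q)); [apply H|exact H]. }
  assert (JMb : forall r b ov tv, In r (qprog Q) -> In b (body r) -> holds J ov tv (psi_atom b) -> holds M ov tv b).
  { intros r b ov tv Hr Hb H. unfold holds in *. simpl in H. apply JM; auto.
    apply (Hnr r b Hr). now right. }
  assert (HJ : is_model J (progX Q tin tout tmem X D')).
  { intros r Hr. unfold progX in Hr. apply in_app_or in Hr as [Hr|Hr]; [apply in_app_or in Hr as [Hr|Hr]|].
    - unfold Pi_constr in Hr. apply in_app_or in Hr as [Hr|Hr]; [|apply in_app_or in Hr as [Hr|Hr]].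
      +
        unfold part_i in Hr. apply filter_In in Hr as [Hr Hn]. apply in_map_iff in Hr as [r0 [<- Hr0']].
        intros ov tv Hb. destruct (body_nonempty _ r0 Hwf Hnr Hnt Hr0') as [_ Hidb].
        assert (Hh := HMr r0 Hr0' ov tv).
        assert (Hh' : holds M ov tv (head r0)).
        { apply Hh. intros b Hbb. apply (JMb r0 b ov tv Hr0' Hbb). apply Hb. simpl. now apply in_map. }
        unfold holds in *. simpl. rewrite (psi_pred_idb _ Hidb). simpl. rewrite Hidb.
        destruct (peq_dec Sg (apred (head r0)) (qpred Q)) as [E|]; [|exact Hh'].
        exfalso. unfold is_PQ_head in Hn. simpl in Hn. rewrite (psi_pred_idb _ Hidb), E in Hn.
        destruct (epred_eq_dec Sg (EOrig (qpred Q)) (EOrig (qpred Q))); simpl in Hn; [discriminate|congruence].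
      +
        unfold part_ii in Hr. apply in_flat_map in Hr as [r1 [Hr1 Hr]]. apply in_flat_map in Hr as [t' [Ht' Hr]].
        apply filter_In in Hr1 as [Hr1 Hq]. apply in_map_iff in Hr1 as [r0 [<- Hr0']].
        assert (Hhd : apred (head r0) = qpred Q).
        { unfold is_PQ_head in Hq. destruct (peq_dec (ext Sg) _ _) as [E|]; [|discriminate].
          apply psi_pred_EOrig. exact E. }
        assert (Gen : forall t c, (forall tv, option_map (eval_t (upd tv t c)) (atime (head r0)) = Some t') ->
                  sat_rule J (subst_rule t c (psi_rule r0))).
        { intros t c Hc ov tv Hb.
          assert (Hh' : holds M ov (upd tv t c) (head r0)).
          { apply (HMr r0 Hr0'). intros b Hbb. apply (JMb r0 b ov _ Hr0' Hbb). apply subst_holds.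
            apply Hb. simpl. rewrite map_map. apply (in_map (fun x => subst_atom t c (psi_atom x))). exact Hbb. }
          change (holds J ov tv (subst_atom t c (psi_atom (head r0)))). apply subst_holds. unfold holds in *. simpl. rewrite Hhd. rewrite (psi_pred_idb _ Hr0). simpl.
          rewrite Hr0. destruct (peq_dec Sg (qpred Q) (qpred Q)) as [_|n]; [|congruence].
          rewrite Hhd in Hh'. split; [exact Hh'|]. exists t'. split; auto. }
        unfold inst_head in Hr. change (atime (head (psi_rule r0))) with (atime (head r0)) in Hr. destruct (atime (head r0)) as [[z|t|t k]|] eqn:Eh.
        * exfalso. eapply Hnt; eauto. now left.
        * destruct Hr as [<-|[]]. apply Gen. intro tv. try rewrite Eh. simpl. unfold upd. now rewrite Nat.eqb_refl.
        * destruct Hr as [<-|[]]. apply Gen. intro tv. try rewrite Eh. simpl. unfold upd. rewrite Nat.eqb_refl. f_equal. lia.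
        * destruct Hr.
      +
        unfold part_iii in Hr. apply in_map_iff in Hr as [p [<- Hp]]. apply filter_In in Hp as [_ Hp].
        apply andb_prop in Hp as [He Ht].
        intros ov tv Hb. unfold copy_rule in Hb |- *. simpl in Hb.
        assert (H1 := Hb _ (or_introl eq_refl)). assert (H2 := Hb _ (or_intror (or_introl eq_refl))).
        unfold holds in *. simpl in *. rewrite He in H1. rewrite Ht in H1.
        destruct H1 as [H1|H1]; [|discriminate]. destruct H2 as [z [Ez Hz]]. injection Ez as <-.
        apply fact_entailed. unfold P. apply in_or_app; right. apply in_map. apply in_or_app; right. eapply HU; eauto.
    - apply in_map_iff in Hr as [a [<- Ha]]. intros ov tv _. apply in_app_or in Ha as [Ha|Ha].
      + unfold D0 in Ha. apply in_map_iff in Ha as [z [<- Hz]]. unfold holds. simpl. eauto.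
      + apply in_map_iff in Ha as [a0 [<- Ha0]]. unfold dataset in HX. rewrite Forall_forall in HX.
        destruct (HX a0 Ha0) as [Hf He]. destruct (fact_ground a0 Hf) as [os' [ot' Eg]].
        assert (Hm : rel M (apred a0) os' ot').
        { apply fact_entailed. unfold P. apply in_or_app; right. apply in_map. apply in_or_app; left.
          rewrite <- Eg. exact Ha0. }
        rewrite Eg. unfold psi_atom. simpl. apply (holds_ground J ov tv (psi_pred (apred a0)) os' ot').
        simpl. rewrite map_id. unfold psi_pred. rewrite He. simpl.
        destruct (is_temporal Sg (apred a0)) eqn:Et; simpl. exact Hm. rewrite He. now right.
    - apply in_map_iff in Hr as [a [<- Ha]]. intros ov tv _. unfold dataset in HD'. rewrite Forall_forall in HD'.
      destruct (HD' a Ha) as [Hf He]. destruct (fact_ground a Hf) as [os' [ot' Eg]].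
      rewrite Eg. apply holds_ground. simpl. rewrite map_id.
      destruct (apred a) as [p|p|] eqn:Ep; simpl in He; try discriminate. rewrite He. left.
      rewrite <- Eg. exact Ha. }
  specialize (HE J HJ (fun _ => 0%nat) (fun _ => 0)). apply holds_ground in HE. simpl in HE.
  rewrite map_id, Hr0 in HE. destruct (peq_dec Sg (qpred Q) (qpred Q)) as [_|n]; [|congruence].
  destruct HE as [H1 [t' [Et Ht']]]. injection Et as <-. split; auto.
Qed.

Definition unlift {Sg} (Q : query Sg) (tin tmem : Z) (a : atom (ext Sg)) : list (atom Sg) :=
  match apred a with
  | EOrig p => if is_edb Sg p && is_temporal Sg p then
      match atime a with
      | Some (TCst z) => if (tin <? z) && (z <=? tmem + 2 * rad (qprog Q)) then [mkAtom p (aobj a) (atime a)] else []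
      | _ => [] end else []
  | _ => [] end.

Lemma unlift_props {Sg} (Q : query Sg) tin tmem a u : is_fact a -> In u (unlift Q tin tmem a) ->
  is_fact u /\ is_edb Sg (apred u) = true /\ is_temporal Sg (apred u) = true /\
  length (aobj u) = oarity Sg (apred u) /\ (exists z, atime u = Some (TCst z) /\ tin < z) /\
  mkAtom (S := ext Sg) (EOrig (apred u)) (aobj u) (atime u) = a.
Proof.
  intros [[Hl Ht] [Ho Htm]] Hu. unfold unlift in Hu. remember (tmem + 2 * rad (qprog Q)) as rr. destruct a as [[p|p|] ob tm]; cbn -[rad] in *; try contradiction.
  destruct (is_edb Sg p) eqn:He; cbn -[rad] in Hu; [|contradiction].
  destruct (is_temporal Sg p) eqn:Et; cbn -[rad] in Hu; [|contradiction].
  destruct tm as [[z| |]|]; try contradiction.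
  destruct ((tin <? z) && (z <=? rr)) eqn:Ez; cbn -[rad] in Hu; [|contradiction].
  destruct Hu as [<-|[]]. simpl. apply andb_prop in Ez as [Ez _]. apply Z.ltb_lt in Ez.
  repeat split; eauto; try discriminate; try reflexivity.
Qed.

Definition lift {Sg} (u : atom Sg) : atom (ext Sg) := mkAtom (S := ext Sg) (EOrig (apred u)) (aobj u) (atime u).

Lemma dataset_filter {Sg} (X : list (atom Sg)) f : dataset X -> dataset (filter f X).
Proof. unfold dataset. rewrite !Forall_forall. intros H x Hx. apply filter_In in Hx. apply H, Hx. Qed.

Theorem lemma8 (S : Sig) (Q : query S) (D : list (atom S)) (tin tout tmem : Z) :
  forget_instance Q D tin tout tmem ->
  nonrecursive (qprog Q) ->
  connected (qprog Q) ->
  no_rigid_atoms (qprog Q) ->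
  no_time_points (qprog Q) ->
  (forget Q D tin tout tmem <->
   contained (Q1 Q tin tout tmem D) (Q2 Q tin tout tmem D)).
Proof.
  intros [[[_ Hwf] [Hr0 _]] [Htemp [[HDd _] [Hmo Hoi]]]] Hacyc Hc Hnr Hnt.
  split.
  - intros Hf D' HD' os ot [Hl [Ht HE]].
    simpl in Hl, Ht. destruct ot as [tau|]; [|exfalso; apply Ht in Htemp; now apply Htemp].
    set (U := flat_map (unlift Q tin tmem) D').
    assert (HUp : forall u, In u U -> is_fact u /\ is_edb S (apred u) = true /\ is_temporal S (apred u) = true /\
       length (aobj u) = oarity S (apred u) /\ (exists z, atime u = Some (TCst z) /\ tin < z) /\ In (lift u) D').
    { intros u Hu. apply in_flat_map in Hu as [a [Ha Hu]].
      unfold dataset in HD'. rewrite Forall_forall in HD'. destruct (HD' a Ha) as [Hfa _].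
      destruct (unlift_props Q tin tmem a u Hfa Hu) as [H1 [H2 [H3 [H4 [H5 H6]]]]].
      refine (conj H1 (conj H2 (conj H3 (conj H4 (conj H5 _))))). unfold lift. rewrite H6. exact Ha. }
    assert (HUU : forall p ds z, In (ground_atom (S := ext S) (EOrig p) ds (Some z)) D' -> is_edb S p = true ->
     is_temporal S p = true -> In z (upd_range Q tin tmem) -> In (ground_atom p ds (Some z)) U).
    { intros p ds z Hin He Ht' Hz. apply in_flat_map. exists (ground_atom (S := ext S) (EOrig p) ds (Some z)).
      split; auto. unfold upd_range in Hz. apply in_zrange in Hz.
      assert (Hb : (tin <? z) && (z <=? tmem + 2 * rad (qprog Q)) = true).
      { apply andb_true_intro. split. apply Z.ltb_lt; lia. apply Z.leb_le; lia. }
      unfold unlift, ground_atom. cbn [apred atime option_map]. rewrite He, Ht'. cbn [andb].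
      rewrite Hb. now left. }
    destruct (lemmaA Q tin tout tmem D U D' tau os Hwf Hnr Hnt Hr0 HDd HD' HUU HE) as [Htau HE1].
    assert (Hupd : update tin U).
    { split; unfold dataset; rewrite Forall_forall; intros u Hu; destruct (HUp u Hu) as [H1 [H2 [H3 [H4 [H5 H6]]]]]; auto. }
    unfold out_range in Htau. assert (Htau' := Htau). apply in_zrange in Htau'.
    assert (Hq0 : Qans_at Q (D ++ U) tau os).
    { split; [exact Hl|split; [split; [intros _; discriminate|intros _; exact Htemp]|exact HE1]]. }
    assert (Hq := proj1 (Hf U Hupd tau (proj1 Htau') os) Hq0).
    destruct Hq as [_ [_ HE2]].
    split; [exact Hl|split; [exact Ht|]].
    apply (lemmaC Q tin tout tmem (restrict D tmem) U D' tau os Hwf Hc Hnr Hnt Hacyc Hr0); auto.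
    intros u Hu. destruct (HUp u Hu) as [H1 [H2 [H3 [H4 [H5 H6]]]]]. auto.
  - intros Hcont U [HUd HUt] tau Htau os. split.
    + intros [Hl [Ht HE]]. split; [exact Hl|split; [exact Ht|]].
      destruct (Z_le_gt_dec tau (tmem + rad (qprog Q))) as [Hle|Hgt].
      * set (D' := map lift U).
        unfold dataset in HUd. rewrite Forall_forall in HUd, HUt.
        assert (HD' : dataset D').
        { unfold dataset. rewrite Forall_forall. intros a Ha. apply in_map_iff in Ha as [u [<- Hu]].
          destruct (HUd u Hu) as [[[Hl' Ht'] [Ho Htm]] He]. unfold lift. repeat split; simpl; auto; apply Ht'; auto. }
        assert (Hτ : In tau (out_range Q tout tmem)) by (apply in_zrange; lia).
        assert (HC := lemmaC Q tin tout tmem D U D' tau os Hwf Hc Hnr Hnt Hacyc Hr0).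
        assert (HQ1 : Qans (Q1 Q tin tout tmem D) D' os (Some tau)).
        { split; [exact Hl|split; [exact Ht|]]. apply HC; auto.
          intros u Hu. destruct (HUd u Hu) as [[[Hl' _] _] He]. destruct (HUt u Hu) as [Htu [z [Ez Hz]]].
          repeat split; eauto. apply (in_map lift), Hu. }
        destruct (Hcont D' HD' os (Some tau) HQ1) as [_ [_ HE2]].
        apply (lemmaA Q tin tout tmem (restrict D tmem) U D' tau os Hwf Hnr Hnt Hr0 (dataset_filter _ _ HDd) HD'); auto.
        intros p ds z Hin _ _ _. apply in_map_iff in Hin as [u [Eu Hu]].
        destruct u as [pu ou tu]. unfold lift in Eu. simpl in Eu. injection Eu as -> -> ->. exact Hu.
      * apply (loc (qprog Q) (qpred Q) D U tmem tau os Hwf Hc Hnr Hnt Hacyc); auto. lia.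
    + intros [Hl [Ht HE]]. split; [exact Hl|split; [exact Ht|]].
      eapply entails_mono; [|exact HE].
      intros r Hr. apply in_app_or in Hr as [Hr|Hr]; apply in_or_app; auto. right.
      apply in_map_iff in Hr as [a [<- Ha]]. apply in_map. apply in_app_or in Ha as [Ha|Ha]; apply in_or_app; auto.
      left. apply filter_In in Ha. apply Ha.
Qed.
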